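(* Let $H_5$ be the 3-graph with vertex set $[6]$ and edges $142,143,145,146,251,253,254,256,361,362,364,365$. Then $\lambda(H_5)\le\frac{1}{16}$.
   Context: For a 3-uniform hypergraph $H$ on vertices $1,\dots,m$, its Lagrangian is $\lambda(H)=\max\{\sum_{ijk\in E(H)}x_ix_jx_k : x\in[0,1]^m,\ x_1+\dots+x_m=1\}$. *)

(* Defs.v *)
From mathcomp Require Import all_boot all_order all_algebra.
From mathcomp Require Import classical_sets reals.
Set Implicit Arguments. Unset Strict Implicit. Unset Printing Implicit Defensive.
Import Order.TTheory GRing.Theory Num.Theory.
Local Open Scope ring_scope.
Local Open Scope classical_set_scope.

(* A hypergraph on vertex set 'I_m (vertices 1..m of the paper are 0..m-1)
   is given by its edge set E : {set {set 'I_m}}; it is 3-uniform when every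
   edge has exactly 3 elements. *)
Definition uniform3 (m : nat) (E : {set {set 'I_m}}) : bool :=
  [forall e in E, #|e| == 3%N].

Definition lag_poly (R : realType) (m : nat) (E : {set {set 'I_m}})
  (x : 'I_m -> R) : R := \sum_(e in E) \prod_(i in e) x i.

Definition simplex (R : realType) (m : nat) : set ('I_m -> R) :=
  [set x | (forall i, 0 <= x i <= 1) /\ \sum_i x i = 1].

(* Lagrangian: the maximum (= supremum, attained by compactness) of the
   edge polynomial over the simplex. *)
Definition lagrangian (R : realType) (m : nat) (E : {set {set 'I_m}}) : R :=
  sup [set lag_poly E x | x in @simplex R m].

Definition v6 (k : nat) : 'I_6 := inord k.-1.
Definition e6 (a b c : nat) : {set 'I_6} := [set v6 a; v6 b; v6 c].

Definition H5 : {set {set 'I_6}} :=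
  [set e6 1 4 2; e6 1 4 3; e6 1 4 5; e6 1 4 6;
       e6 2 5 1; e6 2 5 3; e6 2 5 4; e6 2 5 6;
       e6 3 6 1; e6 3 6 2; e6 3 6 4; e6 3 6 5].

(* Main.v *)
Require Import Defs.
From mathcomp Require Import all_boot all_order all_algebra.
From mathcomp Require Import classical_sets reals ring lra.
Import Order.TTheory GRing.Theory Num.Theory.
Local Open Scope ring_scope.

Lemma schur_ord (R : realType) (a b c : R) : 0 <= c -> c <= b -> b <= a ->
  a*b*(a+b) + b*c*(b+c) + c*a*(c+a) <= a^+3 + b^+3 + c^+3 + 3 * a*b*c.
Proof.
move=> h0 h1 h2.
have e1 : 0 <= (a-b)*(a-b)*(a+b-c) by apply: mulr_ge0; [apply: mulr_ge0|]; lra.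
have e2 : 0 <= c*(a-c)*(b-c) by apply: mulr_ge0; [apply: mulr_ge0|]; lra.
have -> : a^+3 = a*a*a by rewrite !exprS expr0 mulr1 mulrA.
have -> : b^+3 = b*b*b by rewrite !exprS expr0 mulr1 mulrA.
have -> : c^+3 = c*c*c by rewrite !exprS expr0 mulr1 mulrA.
nra.
Qed.

Lemma schur (R : realType) (a b c : R) : 0 <= a -> 0 <= b -> 0 <= c ->
  a*b*(a+b) + b*c*(b+c) + c*a*(c+a) <= a^+3 + b^+3 + c^+3 + 3 * a*b*c.
Proof.
move=> ha hb hc.
have [ab|ab] := leP b a; have [bc|bc] := leP c b; have [ac|ac] := leP c a;
  first [ lra | have := @schur_ord R a b c ltac:(lra) ltac:(lra) ltac:(lra); nra
        | have := @schur_ord R a c b ltac:(lra) ltac:(lra) ltac:(lra); nra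
        | have := @schur_ord R b a c ltac:(lra) ltac:(lra) ltac:(lra); nra
        | have := @schur_ord R b c a ltac:(lra) ltac:(lra) ltac:(lra); nra
        | have := @schur_ord R c a b ltac:(lra) ltac:(lra) ltac:(lra); nra
        | have := @schur_ord R c b a ltac:(lra) ltac:(lra) ltac:(lra); nra ].
Qed.

Lemma key (R : realType) (x1 x2 x3 x4 x5 x6 : R) :
  0 <= x1 -> 0 <= x2 -> 0 <= x3 -> 0 <= x4 -> 0 <= x5 -> 0 <= x6 ->
  x1 + x2 + x3 + x4 + x5 + x6 = 1 ->
  x1*x4*(x2+x3+x5+x6) + x2*x5*(x1+x3+x4+x6) + x3*x6*(x1+x2+x4+x5) <= 1/16.
Proof.
move=> h1 h2 h3 h4 h5 h6 hs.
set a := x1 + x4; set b := x2 + x5; set c := x3 + x6.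
have ha : 4 * (x1*x4*(x2+x3+x5+x6)) <= a*a*(b+c).
  have : 0 <= (x1-x4)*(x1-x4)*(x2+x3+x5+x6) by apply: mulr_ge0; [by rewrite -expr2 sqr_ge0|lra].
  rewrite /a /b /c; nra.
have hb : 4 * (x2*x5*(x1+x3+x4+x6)) <= b*b*(a+c).
  have : 0 <= (x2-x5)*(x2-x5)*(x1+x3+x4+x6) by apply: mulr_ge0; [by rewrite -expr2 sqr_ge0|lra].
  rewrite /a /b /c; nra.
have hc : 4 * (x3*x6*(x1+x2+x4+x5)) <= c*c*(a+b).
  have : 0 <= (x3-x6)*(x3-x6)*(x1+x2+x4+x5) by apply: mulr_ge0; [by rewrite -expr2 sqr_ge0|lra].
  rewrite /a /b /c; nra.
have hsum : a + b + c = 1 by rewrite /a /b /c; lra.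
have hS := @schur R a b c (addr_ge0 h1 h4) (addr_ge0 h2 h5) (addr_ge0 h3 h6).
have cube : (a+b+c)^+3 = a^+3 + b^+3 + c^+3 + 3*(a*b*(a+b) + b*c*(b+c) + c*a*(c+a)) + 6*a*b*c.
  by rewrite !exprS expr0; ring.
rewrite hsum expr1n in cube.
have : a*a*(b+c) + b*b*(a+c) + c*c*(a+b) = a*b*(a+b) + b*c*(b+c) + c*a*(c+a) by ring.
have habc : 0 <= a*b*c by rewrite !mulr_ge0 // ?addr_ge0.
lra.
Qed.
Lemma v6E k l : (0 < k <= 6)%N -> (0 < l <= 6)%N -> (v6 k == v6 l) = (k == l).
Proof.
move=> /andP[k0 k6] /andP[l0 l6]; rewrite -val_eqE /v6 /= !inordK; last 2 first.
- by rewrite prednK.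
- by rewrite prednK.
by apply/eqP/eqP => [h|->//]; rewrite -(prednK k0) -(prednK l0) h.
Qed.

Lemma memE k (A B : {set 'I_6}) : A = B -> (v6 k \in A) = (v6 k \in B).
Proof. by move=> ->. Qed.

Ltac vsolve := by rewrite ?inE ?v6E.

Ltac esolve := apply/negP; move/eqP;
  first [ by move/(memE 1); rewrite /e6 !inE !v6E
        | by move/(memE 2); rewrite /e6 !inE !v6E
        | by move/(memE 3); rewrite /e6 !inE !v6E
        | by move/(memE 4); rewrite /e6 !inE !v6E
        | by move/(memE 5); rewrite /e6 !inE !v6E
        | by move/(memE 6); rewrite /e6 !inE !v6E ].
Lemma sum_setU1r (R : realType) (T : finType) (A : {set T}) a (F : T -> R) :
  a \notin A -> \sum_(i in A :|: [set a]) F i = F a + \sum_(i in A) F i.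
Proof. by move=> h; rewrite finset.setUC -/(a |: A) big_setU1. Qed.

Lemma prod_setU1r (R : realType) (T : finType) (A : {set T}) a (F : T -> R) :
  a \notin A -> \prod_(i in A :|: [set a]) F i = F a * \prod_(i in A) F i.
Proof. by move=> h; rewrite finset.setUC -/(a |: A) big_setU1. Qed.

Lemma prod_e6 (R : realType) (x : 'I_6 -> R) a b c :
  v6 c \notin [set v6 a; v6 b] -> v6 a != v6 b ->
  \prod_(i in e6 a b c) x i = x (v6 c) * (x (v6 a) * x (v6 b)).
Proof.
move=> ha hb; rewrite /e6 prod_setU1r // big_setU1 ?inE //= big_set1 //.
Qed.

Lemma lagH5 (R : realType) (x : 'I_6 -> R) : lag_poly H5 x =
  let y k := x (v6 k) in
  y 1%N * (y 4%N * y 2%N) + y 1%N * (y 4%N * y 3%N) + y 1%N * (y 4%N * y 5%N) + y 1%N * (y 4%N * y 6%N) +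
  y 2%N * (y 5%N * y 1%N) + y 2%N * (y 5%N * y 3%N) + y 2%N * (y 5%N * y 4%N) + y 2%N * (y 5%N * y 6%N) +
  y 3%N * (y 6%N * y 1%N) + y 3%N * (y 6%N * y 2%N) + y 3%N * (y 6%N * y 4%N) + y 3%N * (y 6%N * y 5%N).
Proof.
rewrite /lag_poly /H5 /=.
rewrite !sum_setU1r //.
rewrite big_set1.
rewrite !prod_e6 //.
rewrite /=. ring.
all: first [ vsolve | esolve
           | rewrite !inE; repeat rewrite negb_or; repeat (apply/andP; split); esolve ].
Qed.

Lemma sum6 (R : realType) (x : 'I_6 -> R) : \sum_i x i =
  x (v6 1%N) + x (v6 2%N) + x (v6 3%N) + x (v6 4%N) + x (v6 5%N) + x (v6 6%N).
Proof.
rewrite !big_ord_recl big_ord0 addr0 !addrA.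
by congr (_ + _ + _ + _ + _ + _); congr x; apply/val_inj; rewrite /v6 /= inordK.
Qed.

Theorem lemma3p3 (R : realType) : lagrangian R H5 <= 1 / 16.
Proof.
rewrite /lagrangian; apply: ge_sup.
  exists (lag_poly H5 (fun _ => 1/6 : R)); exists (fun _ => 1/6 : R) => //.
  split; first by move=> i; apply/andP; split; lra.
  by rewrite sumr_const card_ord; rewrite -mulr_natr; field.
move=> _ [x [hx hs] <-].
rewrite lagH5 /=.
rewrite sum6 in hs.
have P (k : nat) : 0 <= x (v6 k) by case/andP: (hx (v6 k)).
have K := @key R _ _ _ _ _ _ (P 1%N) (P 2%N) (P 3%N) (P 4%N) (P 5%N) (P 6%N) hs. apply: le_trans K.
rewrite le_eqVlt; apply/orP; left; apply/eqP; ring.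
Qed.
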